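(* Let $T$ be an invertible operator in $\mathcal D(\mathcal P_n)$ and let $\Omega$ be a convex circular domain (i.e. an open or closed disk or half-plane) with $Z(T\phi_n)\subset\Omega$. Then $Z(Tf)\subset Z(f)+\Omega$ for all $f\in\mathcal P_n\setminus\{0\}$.
   Context: Let $n\ge 1$ be an integer and $\mathcal P_n$ the complex vector space of polynomials in one complex variable of degree at most $n$; $\phi_k(z)=z^k/k!$. $D$ is differentiation on $\mathcal P_n$, $I$ the identity, and $\mathcal D(\mathcal P_n)$ the linear span of $I,D,\dots,D^n$. For a nonzero $f$, $Z(f)$ is the multiset of roots of $f$ (with multiplicity; empty for nonzero constants). For $A,B\subset\mathbb C$, $A+B=\{u+v:u\in A,v\in B\}$. *)

(* Defs.v *)
From mathcomp Require Import all_boot all_order all_algebra.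
From mathcomp Require Import reals.
From mathcomp.real_closed Require Import complex.
Set Implicit Arguments. Unset Strict Implicit. Unset Printing Implicit Defensive.
Import Order.TTheory GRing.Theory Num.Theory.
Local Open Scope ring_scope.

Section Defs.
Variable R : realType.
Local Notation C := (R[i]).

Definition inPn (n : nat) (f : {poly C}) : Prop := (size f <= n.+1)%N.

Definition phi (k : nat) : {poly C} := (k`!%:R)^-1 *: 'X^k.

(* The operator T = \sum_{k=0}^n a_k D^k of D(P_n), given by its coefficients *)
Definition Dop (n : nat) (a : 'I_n.+1 -> C) (f : {poly C}) : {poly C} :=
  \sum_(k < n.+1) a k *: f^`(k).

Definition invertible_on_Pn (n : nat) (T : {poly C} -> {poly C}) : Prop :=
  (forall f, inPn n f -> inPn n (T f)) /\
  (forall f g, inPn n f -> inPn n g -> T f = T g -> f = g) /\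
  (forall g, inPn n g -> exists2 f, inPn n f & T f = g).

Definition convex_circular_domain (Om : C -> Prop) : Prop :=
  (exists (c : C) (r : R), 0 < r /\ forall z, Om z <-> ComplexField.Normc.normc (z - c) < r) \/
  (exists (c : C) (r : R), 0 < r /\ forall z, Om z <-> ComplexField.Normc.normc (z - c) <= r) \/
  (exists (a : C) (b : R), a != 0 /\ forall z, Om z <-> b < complex.Re (a * z)) \/
  (exists (a : C) (b : R), a != 0 /\ forall z, Om z <-> b <= complex.Re (a * z)).

Definition Zset (f : {poly C}) : C -> Prop := fun z => root f z.

Definition msum (A B : C -> Prop) : C -> Prop :=
  fun w => exists u v, A u /\ B v /\ w = u + v.

End Defs.

(* Main.v *)
Require Import Defs.
From mathcomp Require Import all_boot all_order all_algebra.
From mathcomp Require Import reals.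
From mathcomp.real_closed Require Import complex.
From mathcomp Require Import ring lra.
From Stdlib Require Import Classical.
Import Order.TTheory GRing.Theory Num.Theory.
Local Open Scope ring_scope.

Section Aux.
Variable R : realType.
Local Notation C := (R[i]).
Local Notation cj := (@conjc (R : rcfType)).

Lemma cjD x y : cj (x + y) = cj x + cj y. Proof. exact: rmorphD. Qed.
Lemma cjB x y : cj (x - y) = cj x - cj y. Proof. exact: rmorphB. Qed.
Lemma cjN x : cj (- x) = - cj x. Proof. exact: rmorphN. Qed.
Lemma cjM x y : cj (x * y) = cj x * cj y. Proof. exact: rmorphM. Qed.
Lemma cjV x : cj (x^-1) = (cj x)^-1. Proof. exact: fmorphV. Qed.
Lemma cj0 : cj 0 = 0. Proof. exact: rmorph0. Qed.
Lemma cjn k : cj k%:R = k%:R. Proof. exact: rmorph_nat. Qed.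
Lemma cjK x : cj (cj x) = x. Proof. exact: conjcK. Qed.
Lemma cj_eq0 x : (cj x == 0) = (x == 0).
Proof. by apply/idP/idP => /eqP h; apply/eqP; [rewrite -[x]cjK h cj0 | rewrite h cj0]. Qed.

Definition qf (A b g z : C) := A * (z * cj z) + (b * z + cj (b * z)) + g.
Definition inO (st : bool) (A b g z : C) : bool :=
  if st then qf A b g z < 0 else qf A b g z <= 0.

Lemma cj_real (x : C) : x \is Num.real -> cj x = x.
Proof. by case/complex_realP=> k ->; rewrite conjc_real. Qed.

Lemma addcj_real (x : C) : x + cj x \is Num.real.
Proof. by rewrite addcJ rpredM ?rpred_nat //; apply/complex_realP; eexists. Qed.

Lemma qf_real A b g z : A \is Num.real -> g \is Num.real -> qf A b g z \is Num.real.
Proof.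
move=> hA hg; rewrite /qf rpredD // rpredD //; last exact: addcj_real.
by rewrite rpredM // ger0_real // mulcJ_ge0.
Qed.

Lemma cs_eq (x : C) (s : seq C) :
  \sum_(t <- s) (x - t) * cj (x - t) =
  (size s)%:R * (x * cj x) + \sum_(t <- s) t * cj t
   - x * cj (\sum_(t <- s) t) - (\sum_(t <- s) t) * cj x.
Proof.
elim: s => [|y s IH]; first by rewrite !big_nil cj0 /= !(mul0r, mulr0, subr0, addr0, mul0rn).
rewrite !big_cons IH /= cjB mulrS; ring.
Qed.

Lemma cs (s : seq C) :
  (\sum_(t <- s) t) * cj (\sum_(t <- s) t) <= (size s)%:R * \sum_(t <- s) t * cj t.
Proof.
elim: s => [|x s IH]; first by rewrite !big_nil mulr0 mul0r.
rewrite !big_cons /= cjD -subr_ge0.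
have -> : (size s).+1%:R * (x * cj x + \sum_(t <- s) t * cj t) -
   (x + \sum_(t <- s) t) * (cj x + cj (\sum_(t <- s) t)) =
   ((size s)%:R * \sum_(t <- s) t * cj t - (\sum_(t <- s) t) * cj (\sum_(t <- s) t))
   + \sum_(t <- s) (x - t) * cj (x - t).
  by rewrite cs_eq mulrS; ring.
rewrite addr_ge0 ?subr_ge0 //.
by apply: sumr_ge0 => t _; exact: mulcJ_ge0.
Qed.

Lemma sum_qf A b g (s : seq C) :
  \sum_(t <- s) qf A b g t = A * \sum_(t <- s) t * cj t
    + (b * \sum_(t <- s) t + cj (b * \sum_(t <- s) t)) + (size s)%:R * g.
Proof.
elim: s => [|y s IH]; first by rewrite !big_nil !mulr0 cj0 /= !(mul0r, mulr0, subr0, addr0, add0r, mul0rn).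
rewrite !big_cons IH /= /qf !cjM !cjD mulrS; ring.
Qed.

Lemma jensen A b g (s : seq C) : 0 <= A -> (0 < size s)%N ->
  (size s)%:R * qf A b g ((\sum_(t <- s) t) / (size s)%:R) <= \sum_(t <- s) qf A b g t.
Proof.
move=> hA hs; set n := (size s)%:R; set S := \sum_(t <- s) t.
have n0 : n != 0 by rewrite pnatr_eq0 -lt0n.
have cn : cj n = n by rewrite cjn.
rewrite sum_qf -subr_ge0.
have -> : A * \sum_(t <- s) t * cj t + (b * S + cj (b * S)) + n * g -
   n * qf A b g (S / n) = A / n * (n * \sum_(t <- s) t * cj t - S * cj S).
  rewrite /qf !cjM cjV cn; field; exact: n0.
apply: mulr_ge0; first by apply: divr_ge0 => //; exact: ler0n.
by rewrite subr_ge0; exact: cs.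
Qed.


Lemma sum_le0 (s : seq C) (F : C -> C) :
  (forall t, t \in s -> F t <= 0) -> \sum_(t <- s) F t <= 0.
Proof.
elim: s => [|x s IH] h; first by rewrite big_nil.
rewrite big_cons -[X in _ <= X]addr0; apply: lerD; first by apply: h; rewrite mem_head.
by apply: IH => t ht; apply: h; rewrite in_cons ht orbT.
Qed.

Lemma sum_lt0 (s : seq C) (F : C -> C) : s != [::] ->
  (forall t, t \in s -> F t < 0) -> \sum_(t <- s) F t < 0.
Proof.
case: s => [//|x s] _ h; rewrite big_cons.
have hx : F x < 0 by apply: h; rewrite mem_head.
rewrite -[X in _ < X]addr0; apply: ltr_leD => //.
by apply: sum_le0 => t ht; apply: ltW; apply: h; rewrite in_cons ht orbT.
Qed.

Lemma inO_mean st A b g (s : seq C) : 0 <= A -> s != [::] ->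
  (forall t, t \in s -> inO st A b g t) ->
  inO st A b g ((\sum_(t <- s) t) / (size s)%:R).
Proof.
move=> hA hs h.
have hs' : (0 < size s)%N by case: s hs {h}.
have n0 : 0 < (size s)%:R :> C by rewrite ltr0n.
have J := jensen A b g s hA hs'.
rewrite /inO; case: st h => h.
- rewrite -(pmulr_rlt0 _ n0); apply: le_lt_trans J _.
  by apply: sum_lt0 => // t /h.
- rewrite -(pmulr_rle0 _ n0); apply: le_trans J _.
  by apply: sum_le0 => t /h.
Qed.

Lemma qf_inv A b g x t : cj A = A -> t != 0 ->
  qf A b g (x - t^-1) * (t * cj t) = qf (qf A b g x) (- (A * x) - cj b) A t.
Proof.
move=> hA t0; have ct0 : cj t != 0 by rewrite cj_eq0.
rewrite /qf !(cjD, cjB, cjM, cjN, cjV) hA cjK; field; by rewrite ct0 t0.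
Qed.

Lemma logder (rs : seq C) x : x \notin rs ->
  (\prod_(z <- rs) ('X - z%:P))^`().[x] =
  (\prod_(z <- rs) ('X - z%:P)).[x] * \sum_(z <- rs) (x - z)^-1.
Proof.
elim: rs => [|y rs IH]; first by rewrite !big_nil derivC horner0 mulr0.
rewrite in_cons negb_or => /andP[xy xrs].
rewrite !big_cons derivM derivXsubC mul1r !hornerE IH //.
have : x - y != 0 by rewrite subr_eq0.
set P := (\prod_(_ <- _) _).[x]; set S := \sum_(_ <- _) _ => h.
by field.
Qed.


Lemma sgn_mul st (y p : C) : 0 < p ->
  (if st then y * p < 0 else y * p <= 0) = (if st then y < 0 else y <= 0).
Proof. by move=> hp; case: st; rewrite ?pmulr_llt0 ?pmulr_lle0. Qed.

Lemma tct_gt0 (t : C) : t != 0 -> 0 < t * cj t.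
Proof.
move=> t0; rewrite lt_def mulcJ_ge0 andbT mulf_neq0 //; by rewrite cj_eq0.
Qed.

Lemma inO_inv st A b g x t : cj A = A -> t != 0 ->
  inO st (qf A b g x) (- (A * x) - cj b) A t = inO st A b g (x - t^-1).
Proof.
move=> hA t0; rewrite /inO -qf_inv //; have hp := @tct_gt0 t t0; case: st; [exact: pmulr_llt0 | exact: pmulr_lle0].
Qed.

Lemma laguerre st A b g (c : C) (rs : seq C) (zeta x : C) :
  0 <= A -> g \is Num.real -> c != 0 -> rs != [::] ->
  (forall z, z \in rs -> inO st A b g z) -> ~~ inO st A b g zeta ->
  root ((size rs)%:R *: (c *: \prod_(z <- rs) ('X - z%:P))
        - ('X - zeta%:P) * (c *: \prod_(z <- rs) ('X - z%:P))^`()) x ->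
  inO st A b g x.
Proof.
move=> hA hg c0 rs0 hrs hz hx.
have Areal : A \is Num.real := ger0_real hA.
have cA : cj A = A := cj_real _ Areal.
apply/negPn/negP => nx.
have xrs : x \notin rs by apply: contraNN nx => /hrs.
set P := \prod_(z <- rs) ('X - z%:P).
have : ~~ root P x by rewrite root_prod_XsubC.
rewrite /root => Px.
set S := \sum_(z <- rs) (x - z)^-1.
have eq1 : (size rs)%:R = (x - zeta) * S.
  move: hx; rewrite /root derivZ hornerD hornerN hornerM hornerXsubC !hornerZ logder // => /eqP h.
  apply: (mulIf (mulf_neq0 c0 Px)); apply/eqP; rewrite -subr_eq0; apply/eqP.
  rewrite -[RHS]h /S /P; ring.
have n0 : (size rs)%:R != 0 :> C by rewrite pnatr_eq0 size_eq0.
have xz : x - zeta != 0.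
  by apply/eqP => h0; move: n0; rewrite eq1 h0 mul0r eqxx.
have S0 : S != 0.
  by apply/eqP => h0; move: n0; rewrite eq1 h0 mulr0 eqxx.
have mean : S / (size rs)%:R = (x - zeta)^-1.
  by rewrite eq1; field; rewrite S0 xz.
set P' := qf A b g x.
have P'real : P' \is Num.real by apply: qf_real.
have P'ge : 0 <= P'.
  move: nx; rewrite /inO -/P'; case: st {hrs hz} => nx.
  - by rewrite real_leNgt ?real0.
  - by apply: ltW; rewrite real_ltNge ?real0.
set ts := [seq (x - z)^-1 | z <- rs].
have Hm := @inO_mean st P' (- (A * x) - cj b) A ts P'ge.
rewrite big_map size_map -/S mean in Hm.
have : inO st P' (- (A * x) - cj b) A (x - zeta)^-1.
  apply: Hm; first by rewrite -size_eq0 size_map size_eq0.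
  move=> t /mapP [z zrs ->].
  have zx : x - z != 0 by rewrite subr_eq0; apply: contraNneq xrs => ->.
  rewrite inO_inv ?invr_eq0 // invrK.
  have -> : x - (x - z) = z by ring.
  exact: hrs.
rewrite inO_inv ?invr_eq0 // invrK.
have -> : x - (x - zeta) = zeta by ring.
by apply/negP.
Qed.


Definition Top (N : nat) (a : nat -> C) (p : {poly C}) := \sum_(k < N) a k *: p^`(k).

Lemma top_ext N M (a : nat -> C) (p : {poly C}) : (size p <= N)%N -> (N <= M)%N -> Top M a p = Top N a p.
Proof.
move=> hp hNM; rewrite /Top (big_ord_widen M (fun k => a k *: p^`(k)) hNM) [RHS]big_mkcond /=.
apply: eq_bigr => i _; case: ifP => // /negbT; rewrite -leqNgt => hi.
by rewrite derivn_poly0 ?scaler0 // (leq_trans hp hi).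
Qed.

Lemma derivn_XsubC_mul (v : C) h k :
  (('X - v%:P) * h)^`(k.+1) = ('X - v%:P) * h^`(k.+1) + h^`(k) *+ k.+1.
Proof.
elim: k => [|k IH]; first by rewrite derivn1 derivM derivXsubC mul1r addrC derivn0.
rewrite derivnS IH derivD derivM derivXsubC mul1r derivMn -!derivnS.
by rewrite [_ *+ k.+2]mulrS addrA [h^`(k.+1) + _]addrC.
Qed.

Lemma top_mulX N (a : nat -> C) (v : C) (h : {poly C}) : (size h < N)%N ->
  Top N a (('X - v%:P) * h) =
  ('X - v%:P) * Top N a h + Top N (fun k => a k.+1 *+ k.+1) h.
Proof.
case: N => [//|N] hN.
rewrite [X in _ = _ + X](top_ext N N.+1 _ h) //.
rewrite /Top big_ord_recl derivn0 big_ord_recl derivn0 mulrDr scalerAr -addrA.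
congr (_ + _).
rewrite mulr_sumr -big_split; apply: eq_bigr => i _.
rewrite lift0 derivn_XsubC_mul scalerDr scalerAr; congr (_ + _).
by rewrite -scalerMnr -scalerMnl.
Qed.

Lemma top_lin N (a1 a : nat -> C) (v : C) (h : {poly C}) :
  Top N (fun k => a1 k - v * a k) h = Top N a1 h - v *: Top N a h.
Proof.
rewrite /Top scaler_sumr -sumrB; apply: eq_bigr => i _.
by rewrite scalerBl scalerA.
Qed.

Lemma top0 N (a : nat -> C) (v : C) (h : {poly C}) : (size h < N)%N ->
  (Top N a (('X - v%:P) * h)).[0] = (Top N (fun k => a k.+1 *+ k.+1 - v * a k) h).[0].
Proof.
move=> hN; rewrite top_mulX // top_lin hornerD hornerM hornerXsubC hornerD hornerN hornerZ.
by rewrite sub0r mulNr addrC.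
Qed.

Lemma top_deriv N (a : nat -> C) (p : {poly C}) : (Top N a p)^`() = Top N a p^`().
Proof.
rewrite /Top; elim/big_rec2: _ => [|i x y _ <-]; first by rewrite deriv0.
by rewrite derivD derivZ -derivnS derivSn.
Qed.

Lemma topZ N (a : nat -> C) (c : C) (p : {poly C}) : Top N a (c *: p) = c *: Top N a p.
Proof.
rewrite /Top scaler_sumr; apply: eq_bigr => i _.
by rewrite derivnZ !scalerA mulrC.
Qed.

Lemma fact_neq0 k : (k`!%:R : C) != 0.
Proof. by rewrite pnatr_eq0 -lt0n fact_gt0. Qed.

Lemma phi_deriv k : (phi R k.+1)^`() = phi R k.
Proof.
rewrite /phi derivZ derivXn /= -scalerMnr scalerMnl; congr (_ *: _).
rewrite factS natrM -mulr_natl; have := fact_neq0 k.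
have : (k.+1%:R : C) != 0 by rewrite pnatr_eq0.
by move=> h1 h2; field; rewrite h2 -mulrS pnatr_eq0.
Qed.

Lemma X_phi k : 'X * phi R k = k.+1%:R *: phi R k.+1.
Proof.
rewrite /phi -scalerAr -exprS scalerA; congr (_ *: _).
rewrite factS natrM; have := fact_neq0 k.
have : (k.+1%:R : C) != 0 by rewrite pnatr_eq0.
by move=> h1 h2; field; rewrite h2 -mulrS pnatr_eq0.
Qed.

Lemma derivn_phi m k : (phi R m)^`(k) = if (k <= m)%N then phi R (m - k) else 0.
Proof.
elim: k => [|k IH]; first by rewrite derivn0 subn0.
rewrite derivnS IH; case: (ltngtP k m) => hk.
- by rewrite -(subnSK hk) phi_deriv.
- by rewrite deriv0.
- by rewrite hk subnn /phi expr0 derivZ -polyC1 derivC scaler0.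
Qed.

Lemma coef_phi j i : (phi R j)`_i = if i == j then (j`!%:R)^-1 else 0.
Proof. by rewrite /phi coefZ coefXn; case: eqP; rewrite ?mulr1 ?mulr0. Qed.

Lemma size_phi m : size (phi R m) = m.+1.
Proof. by rewrite /phi size_scale ?size_polyXn // invr_eq0 fact_neq0. Qed.

Lemma coef_top_phi N (a : nat -> C) m i : (m < N)%N -> (i <= m)%N ->
  (Top N a (phi R m))`_i = a (m - i)%N / (i`!%:R).
Proof.
move=> hmN him.
have hmi : (m - i < N)%N by apply: leq_ltn_trans hmN; rewrite leq_subr.
rewrite /Top coef_sum (bigD1 (Ordinal hmi)) //= big1 ?addr0.
  by rewrite coefZ derivn_phi leq_subr subKn // coef_phi eqxx.
move=> k hk; rewrite coefZ derivn_phi; case: ifP => hkm; last by rewrite coef0 mulr0.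
rewrite coef_phi; case: eqP => [hi|]; last by rewrite mulr0.
exfalso; move/eqP: hk; apply; apply: val_inj => /=; rewrite hi subKn //.
Qed.

Lemma size_derivn_le (p : {poly C}) k : (size (p^`(k)) <= size p)%N.
Proof.
elim: k => [|k IH]; first by rewrite derivn0.
rewrite derivnS; apply: leq_trans IH.
have [->|nz] := eqVneq (p^`(k)) 0; first by rewrite deriv0 size_poly0.
exact: ltnW (lt_size_deriv nz).
Qed.

Lemma size_top N (a : nat -> C) (p : {poly C}) : (size (Top N a p) <= size p)%N.
Proof.
rewrite /Top; elim/big_rec: _ => [|i q _ hq]; first by rewrite size_poly0.
apply: leq_trans (size_polyD _ _) _; rewrite geq_max hq andbT.
apply: leq_trans (size_scale_leq _ _) _; exact: size_derivn_le.
Qed.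


Lemma top_const N (a : nat -> C) c : (0 < N)%N -> Top N a c%:P = (a 0%N * c)%:P.
Proof.
case: N => [//|N] _; rewrite /Top big_ord_recl derivn0 big1 ?addr0.
  by rewrite -mul_polyC polyCM.
by move=> i _; rewrite lift0 derivnC /= scaler0.
Qed.

Lemma Q_identity N (a : nat -> C) (v : C) n : (n.+2 <= N)%N ->
  Top N (fun k => a k.+1 *+ k.+1 - v * a k) (phi R n) =
  n.+1%:R *: Top N a (phi R n.+1) - ('X - (- v)%:P) * (Top N a (phi R n.+1))^`().
Proof.
move=> hN.
rewrite top_lin top_deriv phi_deriv.
have := @top_mulX N a 0 (phi R n); rewrite size_phi => /(_ hN).
rewrite polyC0 subr0 X_phi topZ => ->.
rewrite polyCN opprK mulrDl mul_polyC.
by rewrite opprD addrA [_ * _ + _]addrC addrK.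
Qed.


Lemma claim st A b g : 0 <= A -> g \is Num.real ->
  forall m n (a : nat -> C) (h : {poly C}),
  size h = m.+1 -> (m <= n)%N -> a 0%N != 0 ->
  (forall z, root (Top n.+1 a (phi R n)) z -> inO st A b g z) ->
  (forall v, root h v -> ~~ inO st A b g (- v)) ->
  (Top n.+1 a h).[0] != 0.
Proof.
move=> hA hg; elim=> [|m IH] n a h hsz hmn a0 hQ hh.
  move/eqP: hsz => /size_poly1P [c c0 ->].
  by rewrite top_const // hornerC mulf_neq0.
have : size h != 1 by rewrite hsz.
case/closed_rootP => v hv.
case/factor_theorem: (hv) => h1 Dh.
have h10 : h1 != 0 by apply/eqP => h1e; move: hsz; rewrite Dh h1e mul0r size_poly0.
have hsz1 : size h1 = m.+1.
  move: hsz; rewrite Dh size_mul ?polyXsubC_eq0 // size_XsubC addn2 /=.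
  by case.
case: n hmn hQ => [//|n] hmn hQ.
set a' := fun k => a k.+1 *+ k.+1 - v * a k.
have E1 : (Top n.+2 a h).[0] = (Top n.+1 a' h1).[0].
  by rewrite Dh mulrC top0 ?hsz1 // (top_ext n.+1 n.+2 _ h1) ?hsz1.
set Q := Top n.+2 a (phi R n.+1).
have hQn1 : Q`_n.+1 = a 0%N / (n.+1)`!%:R by rewrite coef_top_phi // subnn.
have hQn : Q`_n = a 1%N / n`!%:R by rewrite coef_top_phi // subSnn.
have Q0 : Q`_n.+1 != 0 by rewrite hQn1 mulf_neq0 // invr_eq0 fact_neq0.
have szQ : size Q = n.+2.
  apply/eqP; rewrite eqn_leq; apply/andP; split.
    by apply: leq_trans (size_top _ _ _) _; rewrite size_phi.
  by rewrite ltnNge; apply/negP => /leq_sizeP /(_ n.+1 (leqnn _)) h0; move: Q0; rewrite h0 eqxx.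
have [rs DQ] := closed_field_poly_normal Q.
set c := lead_coef Q in DQ.
have c0 : c != 0 by rewrite /c lead_coefE szQ.
have hc : c = Q`_n.+1 by rewrite /c lead_coefE szQ.
have szrs : size rs = n.+1.
  by move: szQ; rewrite DQ size_scale // size_prod_XsubC; case.
have rs0 : rs != [::] by rewrite -size_eq0 szrs.
have hrs : forall z, z \in rs -> inO st A b g z.
  by move=> z zr; apply: hQ; rewrite -/Q DQ rootZ // root_prod_XsubC.
have hnv : ~~ inO st A b g (- v) by apply: hh.
rewrite E1; apply: (IH n a' h1) => //; last first.
  by move=> u hu; apply: hh; rewrite Dh rootM hu.
- move=> x; rewrite -(top_ext n.+1 n.+2 _ (phi R n)) ?size_phi // Q_identity // -/Q => hx.
  apply: (@laguerre st A b g c rs (- v) x hA hg c0 rs0 hrs hnv).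
  by rewrite szrs -DQ.
- apply/eqP => ha.
  have ha1 : a 1%N = v * a 0%N by apply/eqP; rewrite -subr_eq0 -(mulr1n (a 1%N)); apply/eqP.
  apply: (negP hnv).
  have := @inO_mean st A b g rs hA rs0 hrs.
  have hc2 : (\prod_(z <- rs) ('X - z%:P))`_n = - \sum_(z <- rs) z.
    by have := @coefPn_prod_XsubC _ rs; rewrite szrs; apply.
  have hQ2 : Q`_n = c * - \sum_(z <- rs) z by rewrite {1}DQ coefZ hc2.
  have -> : (\sum_(z <- rs) z) / (size rs)%:R = - v; last by [].
  have hs : \sum_(z <- rs) z = - (Q`_n / c) by rewrite hQ2; field.
  rewrite hs szrs hQn hc hQn1 ha1 factS natrM.
  have := fact_neq0 n; move: a0.
  by move=> e1 e2; field; rewrite e1 e2 -mulrS pnatr_eq0.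
Qed.


Lemma ltc0 (k : R) : ((k%:C)%C < 0 :> C) = (k < 0).
Proof. by rewrite ltcE /= eqxx. Qed.

Lemma lec0 (k : R) : ((k%:C)%C <= 0 :> C) = (k <= 0).
Proof. by rewrite lecE /= eqxx. Qed.

Lemma realCB (x y : R) : ((x - y)%:C)%C = ((x%:C)%C - (y%:C)%C :> C).
Proof. by apply/eqP; rewrite eq_complex /= subr0 !eqxx. Qed.

Lemma real_C (k : R) : (k%:C)%C \is Num.real.
Proof. by apply/complex_realP; exists k. Qed.

Lemma norm_cj (y : C) : y * cj y = (((ComplexField.Normc.normc y) ^+ 2)%:C)%C.
Proof.
case: y => a b; rewrite /ComplexField.Normc.normc sqr_sqrtr ?addr_ge0 ?sqr_ge0 //.
apply/eqP; rewrite eq_complex /=; apply/andP; split; apply/eqP; ring.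
Qed.

Lemma Re_cj (x : C) : ((complex.Re x)%:C)%C = (x + cj x) / 2%:R.
Proof. exact: ReJ_add. Qed.

Lemma circ_repr (Om : C -> Prop) : convex_circular_domain Om ->
  exists st A b g, 0 <= A /\ g \is Num.real /\ forall z, Om z <-> inO st A b g z.
Proof.
have disk : forall (c : C) (r : R) (st : bool), 0 < r -> exists st' A b g,
    0 <= A /\ g \is Num.real /\ forall z,
    (if st then ComplexField.Normc.normc (z - c) < r
     else ComplexField.Normc.normc (z - c) <= r) <-> inO st' A b g z.
  move=> c r st r0; exists st, 1, (- cj c), (c * cj c - (((r ^+ 2)%:C)%C)).
  split; first exact: ler01.
  split; first by rewrite rpredB ?real_C // ger0_real // mulcJ_ge0.
  move=> z; rewrite /inO.
  have -> : qf 1 (- cj c) (c * cj c - ((r ^+ 2)%:C)%C) z =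
     ((ComplexField.Normc.normc (z - c) ^+ 2 - r ^+ 2)%:C)%C.
    rewrite realCB -norm_cj /qf !(cjM, cjN, cjB, cjK); ring.
  have nn : 0 <= ComplexField.Normc.normc (z - c).
    by case: (z - c) => x y; exact: sqrtr_ge0.
  case: st.
  - rewrite ltc0; split => h; first by nra.
    nra.
  - rewrite lec0; split => h; first by nra.
    nra.
have half : forall (a : C) (b : R) (st : bool), exists st' A bb g,
    0 <= A /\ g \is Num.real /\ forall z,
    (if st then b < complex.Re (a * z) else b <= complex.Re (a * z)) <-> inO st' A bb g z.
  move=> a b st; exists st, 0, (- (a / 2%:R)), ((b%:C)%C).
  split=> //; split; first exact: real_C.
  move=> z; rewrite /inO.
  have -> : qf 0 (- (a / 2%:R)) ((b%:C)%C) z = ((b - complex.Re (a * z))%:C)%C.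
    rewrite realCB Re_cj /qf !(cjM, cjN, cjV, cjn); ring.
  case: st.
  - by rewrite ltc0 subr_lt0.
  - by rewrite lec0 subr_le0.
case=> [[c [r [r0 h]]]|[[c [r [r0 h]]]|[[a [b [_ h]]]|[a [b [_ h]]]]]].
- have [st [A [b [g [hA [hg e]]]]]] := disk c r true r0.
  by exists st, A, b, g; split=> //; split=> // z; rewrite h; exact: e.
- have [st [A [b [g [hA [hg e]]]]]] := disk c r false r0.
  by exists st, A, b, g; split=> //; split=> // z; rewrite h; exact: e.
- have [st [A [bb [g [hA [hg e]]]]]] := half a b true.
  by exists st, A, bb, g; split=> //; split=> // z; rewrite h; exact: e.
- have [st [A [bb [g [hA [hg e]]]]]] := half a b false.
  by exists st, A, bb, g; split=> //; split=> // z; rewrite h; exact: e.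
Qed.


Lemma derivn_shift (p : {poly C}) (w : C) k :
  (p \Po ('X + w%:P))^`(k) = p^`(k) \Po ('X + w%:P).
Proof.
elim: k => [|k IH]; first by rewrite !derivn0.
by rewrite !derivnS IH deriv_comp derivD derivX derivC addr0 mulr1.
Qed.

Lemma top_shift N (a : nat -> C) (p : {poly C}) (w : C) :
  (Top N a (p \Po ('X + w%:P))).[0] = (Top N a p).[w].
Proof.
rewrite /Top !horner_sum; apply: eq_bigr => i _.
by rewrite !hornerZ derivn_shift horner_comp hornerD hornerX hornerC add0r.
Qed.

End Aux.

Theorem mainTheorem8 (R : realType) (n : nat) (a : 'I_n.+1 -> R[i])
    (Om : R[i] -> Prop) :
  (1 <= n)%N ->
  invertible_on_Pn n (Dop a) ->
  convex_circular_domain Om ->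
  (forall z, Zset (Dop a (phi R n)) z -> Om z) ->
  forall f : {poly R[i]}, inPn n f -> f != 0 ->
    forall w, Zset (Dop a f) w -> msum (Zset f) Om w.
Proof.
move=> n1 [_ [inj _]] hcirc hQ f fP f0 w hw.
have [st [A [b [g [hA [hg hOm]]]]]] := @circ_repr R Om hcirc.
pose a' := fun k : nat => if (k < n.+1)%N then a (inord k) else 0.
have hD : forall p, Dop a p = Top R n.+1 a' p.
  move=> p; rewrite /Dop /Top; apply: eq_bigr => i _.
  by rewrite /a' ltn_ord inord_val.
have a0 : a' 0%N != 0.
  apply/eqP => e.
  have h1 : Dop a 1 = Dop a 0.
    by rewrite !hD -polyC1 -polyC0 !top_const // e !mul0r.
  have := inj 1 0; rewrite /inPn size_poly1 size_poly0 => /(_ isT isT h1) /eqP.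
  by rewrite oner_eq0.
apply: NNPP => hn.
have hu : forall u, root f u -> ~ Om (w - u).
  move=> u hu hO; apply: hn; exists u, (w - u); split => //; split => //.
  by rewrite addrC subrK.
pose h := f \Po ('X + w%:P).
have szh : size h = (size f).-1.+1.
  rewrite size_comp_poly2 ?size_XaddC // prednK // lt0n size_poly_eq0 //.
have hmn : ((size f).-1 <= n)%N by rewrite -ltnS prednK // lt0n size_poly_eq0.
have hQ' : forall z, root (Top R n.+1 a' (phi R n)) z -> inO R st A b g z.
  move=> z; rewrite -hD => hz; apply/hOm; exact: hQ.
have hh : forall v, root h v -> ~~ inO R st A b g (- v).
  move=> v; rewrite /h /root horner_comp hornerD hornerX hornerC => hv.
  apply/negP => hin; apply: (hu (v + w)); first by [].
  have -> : w - (v + w) = - v by rewrite opprD addrA addrC addrA addNr add0r.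
  by apply/hOm.
have := @claim R st A b g hA hg _ n a' h szh hmn a0 hQ' hh.
have hw' : (Dop a f).[w] = 0 by apply/rootP.
by rewrite top_shift -hD hw' eqxx.
Qed.
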